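(* Let $n\ge1$, $\mathcal{D}=\{u\in(0,1)^n:\sum_{i=1}^nu_i<1\}$, $u_0=1-\sum_{i=1}^nu_i$, and let $q_{ij}\ge0$, $r_{ij}=r_{ji}\ge0$ ($i,j=0,\ldots,n$) be constants with $q_{i0}=q_{0i}=r_{i0}=r_{ii}=0$. Define $q_i(u)=\sum_{j=1}^nq_{ij}u_j$, $r_i(u)=\sum_{j=1}^nr_{ij}u_j$ and, for $i,j=1,\ldots,n$, $$A_{ij}(u)=(q_i(u)-r_i(u))\delta_{ij}+u_i\Big(q_{ij}-q_j(u)+r_{ij}+r_j(u)-\sum_{\ell=1}^nu_\ell(q_{\ell j}+r_{\ell j})\Big),$$ $$(h_B''(u))_{ij}=\frac{\delta_{ij}}{u_i}+\frac1{u_0}.$$ Assume the symmetric part of $(q_{ij}+r_{ij})_{i,j=1}^n$ is positive definite with smallest eigenvalue $\alpha>0$ and $q_{ij}\ge r_{ij}$ for $i,j=1,\ldots,n$. Then $z^Th_B''(u)A(u)z\ge\alpha|z|^2$ for all $u\in\mathcal{D}$ and $z\in\mathbb{R}^n$.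
   Context: $A(u)$ is the diffusion matrix of the multiphase cross-diffusion system with unit drag coefficients written in the variables $u_1,\ldots,u_n$, and $h_B''(u)$ is the Hessian of the Boltzmann entropy density $h_B(u)=\sum_{i=0}^nu_i(\log u_i-1)$ with $u_0=1-\sum_{i=1}^nu_i$. *)

(* Defs.v *)
From mathcomp Require Import all_boot all_order all_algebra.
From mathcomp Require Import reals.
Set Implicit Arguments. Unset Strict Implicit. Unset Printing Implicit Defensive.
Import Order.TTheory GRing.Theory Num.Theory.
Local Open Scope ring_scope.

(* Indices 1..n of the paper are represented by 'I_n (paper index i = val i + 1). *)

Section Defs.
Variables (R : realType) (n : nat).

Definition u0 (u : 'I_n -> R) : R := 1 - \sum_(i < n) u i.

Definition inD (u : 'I_n -> R) : Prop :=
  (forall i, 0 < u i /\ u i < 1) /\ \sum_(i < n) u i < 1.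

Definition lin (q : 'M[R]_n) (u : 'I_n -> R) (i : 'I_n) : R :=
  \sum_(j < n) q i j * u j.

Definition Amat (q r : 'M[R]_n) (u : 'I_n -> R) : 'M[R]_n :=
  \matrix_(i, j)
    ((lin q u i - lin r u i) * (i == j)%:R
     + u i * (q i j - lin q u j + r i j + lin r u j
              - \sum_(l < n) u l * (q l j + r l j))).

Definition hessB (u : 'I_n -> R) : 'M[R]_n :=
  \matrix_(i, j) ((i == j)%:R / u i + 1 / u0 u).

Definition sympart (M : 'M[R]_n) : 'M[R]_n := 2^-1 *: (M + M^T).

End Defs.

(* Main.v *)
Require Import Defs.
From mathcomp Require Import all_boot all_order all_algebra.
From mathcomp Require Import reals.
From mathcomp Require Import complex.
From mathcomp Require Import ring lra.
Import Order.TTheory GRing.Theory Num.Theory.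
Local Open Scope ring_scope.

Section Spec.
Local Open Scope sesquilinear_scope.

Lemma map_real (R : realType) n (S : 'M[R]_n) : map_mx (real_complex R) S \is a mxOver (Num.real : qualifier 0 R[i]).
apply: (introT mxOverP) => i j; rewrite mxE; apply/complex_realP; by exists (S i j).
Qed.

Lemma quad_ge (R : realType) n (S : 'M[R]_n) (Ssym : S^T = S) (alpha : R)
  (hmin : forall a, eigenvalue S a -> alpha <= a) (z : 'cV[R]_n) :
  alpha * \sum_(i < n) z i 0 ^+ 2 <= (z^T *m S *m z) 0 0.
Proof.
pose toC : {rmorphism R -> R[i]} := real_complex R.
pose A := map_mx toC S.
have Areal : forall x : R, (toC x)^* = toC x.
  by move=> x; apply/CrealP; apply/complex_realP; exists x.
have Aherm : A \is hermsymmx.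
  apply/is_hermitianmxP; rewrite expr0 scale1r.
  apply/matrixP => i j; rewrite !mxE Areal -[in LHS]Ssym mxE //.
pose P := spectralmx A. pose d := spectral_diag A.
have PU : P \is unitarymx := spectral_unitarymx A.
have Pu : P \in unitmx := spectral_unit A.
have AE : A = invmx P *m diag_mx d *m P.
  exact/orthomx_spectralP/hermitian_normalmx.
have dreal0 := hermitian_spectral_diag_real Aherm.
have dreal : forall i j, d i j \is Num.real := elimT mxOverP dreal0.
have deig : forall i, exists2 a, d 0 i = toC a & alpha <= a.
  move=> i; exists (complex.Re (d 0 i)).
    exact/esym/RRe_real/dreal.
  apply: hmin; rewrite eigenvalue_root_char -(fmorph_root toC).
  have hd : toC (complex.Re (d 0 i)) = d 0 i by exact: RRe_real (dreal 0 i).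
  rewrite map_char_poly -eigenvalue_root_char.
  suff : eigenvalue A (d 0 i) by rewrite -hd.
  apply/eigenvalueP; exists (delta_mx 0 i *m P).
    rewrite -/A AE !mulmxA mulmxK //.
    have -> : delta_mx 0 i *m diag_mx d = d 0 i *: delta_mx (0 : 'I_1) i.
      apply/matrixP => a b; rewrite mul_mx_diag !mxE.
      rewrite ord1 eqxx /=; case: eqVneq => [->|_]; rewrite ?mulr0 ?mul0r ?mulr1 ?mul1r //.
    by rewrite scalemxAl.
  rewrite mulmx_free_eq0 ?row_free_unit //; apply/negP => /eqP/matrixP/(_ 0 i).
  by rewrite !mxE !eqxx /= => /eqP; rewrite oner_eq0.
pose zc := map_mx toC z. pose w := P *m zc.
have H1 : toC ((z^T *m S *m z) 0 0) = (zc^T *m A *m zc) 0 0.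
  by rewrite /zc /A map_trmx -!map_mxM [RHS]mxE.
have zcC : zc^T ^ Num.conj = zc^T.
  by apply/matrixP => a b; rewrite !mxE Areal.
have H2 : zc^T *m A *m zc = (w ^t* ) *m diag_mx d *m w.
  rewrite AE invmx_unitary // /w trmx_mul map_mxM zcC !mulmxA //.
have H3 : (w ^t* *m w) = zc^T *m zc.
  have PP : P ^t* *m P = 1%:M by apply: mulmx1C; apply/unitarymxP.
  rewrite /w trmx_mul map_mxM zcC -!mulmxA (mulmxA (P ^t*)) PP mul1mx //.
have H4 : (w ^t* *m diag_mx d *m w) 0 0 = \sum_i (w i 0)^* * d 0 i * w i 0.
  by rewrite mul_mx_diag mxE; apply: eq_bigr => k _; rewrite !mxE.
have H5 : (w ^t* *m w) 0 0 = \sum_i (w i 0)^* * w i 0.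
  by rewrite mxE; apply: eq_bigr => k _; rewrite !mxE.
have H6 : (zc^T *m zc) 0 0 = toC (\sum_i z i 0 ^+ 2).
  by rewrite mxE rmorph_sum; apply: eq_bigr => k _; rewrite !mxE rmorphXn expr2.
rewrite -lecR.
change (toC (alpha * \sum_i z i 0 ^+ 2) <= toC ((z^T *m S *m z) 0 0)).
rewrite H1 H2 H4 rmorphM -H6 -H3 H5 mulr_sumr.
apply: ler_sum => i _; have [a -> ha] := deig i.
rewrite mulrAC [toC alpha * _]mulrC ler_wpM2l //.
  by rewrite mulrC mul_conjC_ge0.
by rewrite lecR.
Qed.

End Spec.

Lemma sumA (R : realType) n (q r : 'M[R]_n) (u : 'I_n -> R) j :
  \sum_k Amat q r u k j
  = u0 u * (lin q u j - lin r u j + \sum_(l < n) u l * (q l j + r l j)).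
Proof.
set X := lin q u j - lin r u j + _.
have -> : \sum_k Amat q r u k j =
  \sum_k ((lin q u k - lin r u k) * (k == j)%:R + u k * (q k j + r k j) - u k * X).
  by apply: eq_bigr => k _; rewrite mxE /X; ring.
rewrite big_split /= big_split /= sumrN -mulr_suml.
rewrite (bigD1 j) //= eqxx mulr1 big1 ?addr0; last first.
  by move=> k /negbTE ->; rewrite mulr0.
rewrite /u0 /X; ring.
Qed.

Theorem lemma8 (R : realType) (n : nat) (hn : (0 < n)%N)
  (q r : 'M[R]_n) (alpha : R)
  (hq0 : forall i j, 0 <= q i j)
  (hr0 : forall i j, 0 <= r i j)
  (hrsym : forall i j, r i j = r j i)
  (hrdiag : forall i, r i i = 0)
  (hpd : forall z : 'cV[R]_n, z != 0 -> 0 < (z^T *m sympart (q + r) *m z) 0 0)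
  (halpha_eig : eigenvalue (sympart (q + r)) alpha)
  (halpha_min : forall a, eigenvalue (sympart (q + r)) a -> alpha <= a)
  (halpha_pos : 0 < alpha)
  (hqr : forall i j, r i j <= q i j) :
  forall (u : 'I_n -> R) (z : 'cV[R]_n), inD u ->
    alpha * \sum_(i < n) z i 0 ^+ 2 <= (z^T *m hessB u *m Amat q r u *m z) 0 0.
Proof.
move=> u z [hu hs].
have u0pos : 0 < u0 u by rewrite /u0 subr_gt0.
pose c : 'rV[R]_n := \row_i ((lin q u i - lin r u i) / u i).
have HM : hessB u *m Amat q r u = diag_mx c + (q + r).
  apply/matrixP => i j; rewrite !mxE.
  have -> : \sum_k hessB u i k * Amat q r u k j =
     Amat q r u i j / u i + (u0 u)^-1 * \sum_k Amat q r u k j.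
    under eq_bigr do rewrite mxE mulrDl.
    rewrite big_split /= -mulr_sumr (bigD1 i) //= eqxx big1 ?addr0; last first.
      by move=> k /negbTE; rewrite eq_sym => ->; rewrite mul0r mul0r.
    by rewrite mul1r mulrC mul1r.
  rewrite sumA.
  have ui : u i != 0 by rewrite gt_eqF // (hu i).1.
  have u0n : u0 u != 0 by rewrite gt_eqF.
  by rewrite !mxE -mulr_natr; field; rewrite ui u0n.
have Ssym : (sympart (q + r))^T = sympart (q + r).
  by rewrite /sympart linearZ /= linearD /= trmxK addrC.
have Hsym : (z^T *m sympart (q + r) *m z) 0 0 = (z^T *m (q + r) *m z) 0 0.
  have e : z^T *m (q + r)^T *m z = (z^T *m (q + r) *m z)^T.
    by rewrite !trmx_mul trmxK mulmxA.
  rewrite /sympart -scalemxAr -scalemxAl mulmxDr mulmxDl e !mxE.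
  by field.
have Hc : 0 <= (z^T *m diag_mx c *m z) 0 0.
  rewrite mul_mx_diag mxE; apply: sumr_ge0 => i _; rewrite !mxE.
  rewrite mulrAC -expr2 mulrC; apply: mulr_ge0; last exact: sqr_ge0.
  apply: divr_ge0; last exact: ltW (hu i).1.
  rewrite /lin -sumrB; apply: sumr_ge0 => j _; rewrite -mulrBl.
  by apply: mulr_ge0; [rewrite subr_ge0 | exact: ltW (hu j).1].
have -> : z^T *m hessB u *m Amat q r u = z^T *m (diag_mx c + (q + r)) by rewrite -HM mulmxA.
rewrite mulmxDr mulmxDl mxE -Hsym.
rewrite -[X in X <= _]addr0 addrC; apply: lerD => //.
exact: quad_ge.
Qed.
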